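(* Let $E$ be a finite set with $\sigma$-algebra $\mathcal{E}=2^E$, and let $\mathcal{P}(E)$ denote the set of probability measures on $E$. Suppose that for every $\mu\in\mathcal{P}(E)$ a transition kernel $P_\mu(x,B)$ is given, and for $\mu\in\mathcal{P}(E)$ let $(X^\mu_n)_{n\in\mathbb{Z}_+}$ be the nonlinear Markov chain with $\mathrm{Law}(X_0^\mu)=\mu$ and $\mathbb{P}(X^\mu_{n+1}\in B\mid X^\mu_n=x)=P_{\mu_n}(x,B)$, where $\mu_n:=\mathrm{Law}(X_n^\mu)$ (so $\mu_{n+1}=\int_E P_{\mu_n}(x,\cdot)\mu_n(dx)$). Fix an integer $k\ge1$ and let $Q_\mu(x,dy)=\int P_\mu(x,dx_1)P_{\mu_1}(x_1,dx_2)\cdots P_{\mu_{k-1}}(x_{k-1},dy)$ be the $k$-step kernel. Assume: (i) there is $\alpha_k\in(0,1)$ with $\sup_{\mu,\nu\in\mathcal{P}(E)}\|Q_\mu(x,\cdot)-Q_\nu(y,\cdot)\|_{TV}\le 2(1-\alpha_k)$ for all $x,y\in E$; (ii) there is $\lambda_k\in[0,\alpha_k]$ with $\|Q_\mu(x,\cdot)-Q_\nu(x,\cdot)\|_{TV}\le\lambda_k\|\mu-\nu\|_{TV}$ for all $x\in E$, $\mu,\nu\in\mathcal{P}(E)$; (iii) there is $\lambda_1<\infty$ with $\|P_\mu(x,\cdot)-P_\nu(x,\cdot)\|_{TV}\le\lambda_1\|\mu-\nu\|_{TV}$ for all $x\in E$, $\mu,\nu\in\mathcal{P}(E)$. (Under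 these conditions there is a unique invariant measure $\pi$, i.e. $\pi P_\pi=\pi$.) Let $g:E\to\mathbb{R}$ be bounded, and for a fixed initial measure $\mu$ put $S_n=\sum_{j=0}^{n-1}g(X_j^\mu)$. Then, as $n\to\infty$, $$\frac{S_n}{n}\xrightarrow{\ \mathbb{P}\ }\mathbb{E}[g(X_0^\pi)]=\int_E g(x)\,\pi(dx),$$ where $X^\pi$ denotes the chain started from the invariant measure $\pi$.
   Context: The total variation distance is $\|\mu-\nu\|_{TV}=2\sup_{A\in\mathcal{E}}|\mu(A)-\nu(A)|$. Convergence $\xrightarrow{\mathbb{P}}$ is convergence in probability. *)

(* Defs.v *)
From HB Require Import structures.
From mathcomp Require Import all_boot all_order all_algebra.
From mathcomp Require Import all_classical all_reals all_analysis.
Set Implicit Arguments. Unset Strict Implicit. Unset Printing Implicit Defensive.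
Import Order.TTheory GRing.Theory Num.Theory.
Local Open Scope ring_scope.
Local Open Scope classical_set_scope.

(* Probability measures on a finite set E (sigma-algebra 2^E), represented
   by their mass functions E -> R. *)
Definition is_prob (R : realType) (E : finType) (mu : E -> R) : Prop :=
  (forall x, 0 <= mu x) /\ \sum_(x : E) mu x = 1.

Definition tv (R : realType) (E : finType) (mu nu : E -> R) : R :=
  2 * \big[Num.max/0]_(A : {set E}) `| \sum_(x in A) mu x - \sum_(x in A) nu x |.

(* A family of transition kernels indexed by measures: Pk mu x y = P_mu(x,{y}). *)
Definition nl_kernel (R : realType) (E : finType) := (E -> R) -> E -> E -> R.

Fixpoint flow (R : realType) (E : finType) (Pk : nl_kernel R E) (mu : E -> R) (n : nat)
  : E -> R :=
  match n with
  | 0 => mu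
  | n'.+1 => fun y => \sum_(x : E) flow Pk mu n' x * Pk (flow Pk mu n') x y
  end.

Fixpoint kstep (R : realType) (E : finType) (Pk : nl_kernel R E) (mu : E -> R) (j : nat)
  : E -> E -> R :=
  match j with
  | 0 => fun x y => if x == y then 1 else 0
  | j'.+1 => fun x y => \sum_(z : E) kstep Pk mu j' x z * Pk (flow Pk mu j') z y
  end.

Definition nl_invariant (R : realType) (E : finType) (Pk : nl_kernel R E) (pi : E -> R) : Prop :=
  is_prob pi /\ forall y, \sum_(x : E) pi x * Pk pi x y = pi y.

Definition nl_markov_chain (R : realType) (E : finType) (Pk : nl_kernel R E) (mu : E -> R)
  (d : measure_display) (T : measurableType d) (P : probability T R) (X : nat -> T -> E)
  : Prop :=
  forall (n : nat) (xs : nat -> E),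
    measurable [set w | forall i, (i <= n)%N -> X i w = xs i] /\
    P [set w | forall i, (i <= n)%N -> X i w = xs i] =
      (mu (xs 0%N) * \prod_(i < n) Pk (flow Pk mu i) (xs i) (xs i.+1))%:E.

Arguments is_prob {R E} mu.
Arguments tv {R E} mu nu.
Arguments flow {R E} Pk mu n _.
Arguments kstep {R E} Pk mu j _ _.
Arguments nl_invariant {R E} Pk pi.
Arguments nl_markov_chain {R E} Pk mu {d T} P X.

(* Main.v *)
From HB Require Import structures.
From mathcomp Require Import all_boot all_order all_algebra.
From mathcomp Require Import all_classical all_reals all_analysis.
From mathcomp Require Import ring lra.
Require Import Defs.
Set Implicit Arguments. Unset Strict Implicit. Unset Printing Implicit Defensive.
Import Order.TTheory GRing.Theory Num.Theory.
Local Open Scope ring_scope.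

Section Alg.
Variables (R : realType) (E : finType).

Definition l1 (v : E -> R) : R := \sum_z `|v z|.

Lemma l1_ge0 v : 0 <= l1 v.
Proof. by apply: sumr_ge0 => z _. Qed.

Lemma tv_l1 (u v : E -> R) : \sum_z u z = \sum_z v z ->
  tv u v = l1 (fun z => u z - v z).
Proof.
move=> huv; set d := fun z => u z - v z.
have d0 : \sum_z d z = 0 by rewrite /d sumrB huv subrr.
pose p z := if 0 < d z then d z else 0.
have hl1 : l1 d = 2 * \sum_z p z.
  have -> : l1 d = \sum_z (2 * p z - d z).
    apply: eq_bigr => z _; rewrite /p; case: ifP => h.
      by rewrite gtr0_norm // mulr2n mulrDl mul1r addrK.
    by rewrite ler0_norm ?mulr0 ?sub0r // leNgt h.
  by rewrite sumrB d0 subr0 -mulr_sumr.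
have hB : forall B : {set E}, `| \sum_(z in B) u z - \sum_(z in B) v z | <= \sum_z p z.
  move=> B; rewrite -sumrB big_mkcond /=.
  rewrite ler_norml; apply/andP; split.
    have -> : \sum_z p z = \sum_z (p z - d z) by rewrite sumrB d0 subr0.
    rewrite -sumrN; apply: ler_sum => z _.
    rewrite /p /d; have [h|h] := ltrP 0 (u z - v z); case: (z \in B).
    - by rewrite subrr oppr0 ltW.
    - by rewrite subrr oppr0.
    - by rewrite sub0r opprK.
    - by rewrite sub0r opprK.
  apply: ler_sum => z _; rewrite /p /d; have [h|h] := ltrP 0 (u z - v z); case: (z \in B) => //.
  by rewrite ltW.
rewrite /tv hl1; congr (2 * _); apply/le_anti/andP; split.
  apply: bigmax_le; first by apply: sumr_ge0 => z _; rewrite /p; case: ifP => // /ltW.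
  by move=> B _; apply: hB.
apply: le_trans (le_bigmax _ _ [set z | 0 < d z]).
rewrite -sumrB ger0_norm; last first.
  by apply: sumr_ge0 => z; rewrite inE => h; apply: ltW.
rewrite [X in _ <= X]big_mkcond /=.
by apply: ler_sum => z _; rewrite inE /p /d; case: ifP.
Qed.

End Alg.

Section Kern.
Variables (R : realType) (E : finType) (Pk : nl_kernel R E).
Hypothesis Pk_prob : forall mu x, is_prob mu -> is_prob (Pk mu x).

Definition push (nu v : E -> R) : E -> R := fun z => \sum_x v x * Pk nu x z.

Fixpoint PS (nu : E -> R) (l : nat) (v : E -> R) : E -> R :=
  match l with
  | 0 => v
  | l'.+1 => push (flow Pk nu l') (PS nu l' v)
  end.

Lemma push_sum nu v : is_prob nu -> \sum_z push nu v z = \sum_z v z.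
Proof.
move=> hnu; rewrite /push exchange_big /=; apply: eq_bigr => x _.
by rewrite -mulr_sumr (proj2 (Pk_prob x hnu)) mulr1.
Qed.

Lemma push_prob nu v : is_prob nu -> is_prob v -> is_prob (push nu v).
Proof.
move=> hnu hv; split; last by rewrite push_sum // (proj2 hv).
move=> z; apply: sumr_ge0 => x _; apply: mulr_ge0; first exact: (proj1 hv).
exact: (proj1 (Pk_prob x hnu)).
Qed.

Lemma flow_prob nu n : is_prob nu -> is_prob (flow Pk nu n).
Proof.
move=> hnu; elim: n => [|n IH] //=.
exact: (push_prob IH IH).
Qed.

Lemma flow_shift nu a b : flow Pk (flow Pk nu a) b = flow Pk nu (a + b).
Proof. by elim: b => [|b IH]; rewrite ?addn0 // addnS /= IH. Qed.

Lemma PS_flow nu l : PS nu l nu = flow Pk nu l.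
Proof. by elim: l => [|l IH] //=; rewrite IH. Qed.

Lemma PS_sum nu l v : is_prob nu -> \sum_z PS nu l v z = \sum_z v z.
Proof.
move=> hnu; elim: l => [|l IH] //=.
by rewrite push_sum ?IH //; apply: flow_prob.
Qed.

Lemma PS_prob nu l v : is_prob nu -> is_prob v -> is_prob (PS nu l v).
Proof.
move=> hnu hv; elim: l => [|l IH] //=.
by apply: push_prob => //; apply: flow_prob.
Qed.

Lemma PS_kstep nu l v : PS nu l v = fun y => \sum_x v x * kstep Pk nu l x y.
Proof.
elim: l => [|l IH] /=.
  apply: funext => y; rewrite (bigD1 y) //= eqxx mulr1 big1 ?addr0 //.
  by move=> x /negbTE ->; rewrite mulr0.
apply: funext => y; rewrite /push IH /=.
under eq_bigr do rewrite mulr_suml.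
rewrite exchange_big /=; apply: eq_bigr => x _.
by rewrite mulr_sumr; apply: eq_bigr => z _; rewrite mulrA.
Qed.

Lemma PS_add nu a b v : PS nu (a + b) v = PS (flow Pk nu a) b (PS nu a v).
Proof. by elim: b => [|b IH]; rewrite ?addn0 // addnS /= IH flow_shift. Qed.

Definition dlt (x : E) : E -> R := fun y => if x == y then 1 else 0.

Lemma PS_dlt nu l x : PS nu l (dlt x) = kstep Pk nu l x.
Proof.
rewrite PS_kstep; apply: funext => y; rewrite (bigD1 x) //= /dlt eqxx mul1r big1 ?addr0 //.
by move=> z /negbTE; rewrite eq_sym => ->; rewrite mul0r.
Qed.

Lemma dlt_prob x : is_prob (dlt x).
Proof.
split; first by move=> y; rewrite /dlt; case: ifP.
by rewrite (bigD1 x) //= /dlt eqxx big1 ?addr0 // => y; rewrite eq_sym => /negbTE ->.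
Qed.

Lemma kstep_prob nu l x : is_prob nu -> is_prob (kstep Pk nu l x).
Proof. by move=> hnu; rewrite -PS_dlt; apply: PS_prob => //; apply: dlt_prob. Qed.

End Kern.
Arguments dlt {R E} x _.

Section L1.
Variables (R : realType) (E : finType).
Implicit Types (f g : E -> R).

Lemma l1_D f g : l1 (fun z => f z + g z) <= l1 f + l1 g.
Proof. by rewrite /l1 -big_split /=; apply: ler_sum => z _; apply: ler_normD. Qed.

Lemma l1_sum (I : finType) (F : I -> E -> R) :
  l1 (fun z => \sum_x F x z) <= \sum_x l1 (F x).
Proof.
rewrite /l1 exchange_big /=; apply: ler_sum => z _; apply: ler_norm_sum.
Qed.

Lemma l1_Z c f : l1 (fun z => c * f z) = `|c| * l1 f.
Proof. by rewrite /l1 mulr_sumr; apply: eq_bigr => z _; rewrite normrM. Qed.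

Lemma l1_ext f g : (forall z, f z = g z) -> l1 f = l1 g.
Proof. by move=> h; apply: eq_bigr => z _; rewrite h. Qed.

Lemma dob (u v : E -> R) (K K' : E -> E -> R) (a B : R) :
  is_prob u -> is_prob v ->
  (forall x, is_prob (K x)) -> (forall x, is_prob (K' x)) ->
  (forall x y, l1 (fun z => K x z - K' y z) <= 2 * a) ->
  (forall x, l1 (fun z => K x z - K' x z) <= B) ->
  l1 (fun z => \sum_x u x * K x z - \sum_x v x * K' x z) <=
    a * l1 (fun z => u z - v z) + (1 - l1 (fun z => u z - v z) / 2) * B.
Proof.
move=> [u0 u1] [v0 v1] hK hK' hKK hB.
pose c x := Num.min (u x) (v x).
pose a' x := u x - c x.
pose b' x := v x - c x.
have c0 x : 0 <= c x by rewrite /c le_min u0 v0.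
have a0 x : 0 <= a' x by rewrite /a' subr_ge0 ge_min lexx.
have b0 x : 0 <= b' x by rewrite /b' subr_ge0 ge_min lexx orbT.
set t := \sum_x a' x.
have ht : \sum_x b' x = t.
  by rewrite /t /a' /b' !sumrB u1 v1.
have hc : \sum_x c x = 1 - t by rewrite /t /a' sumrB u1 opprB addrC subrK.
have hd : l1 (fun z => u z - v z) = 2 * t.
  rewrite /l1 mulr2n mulrDl mul1r -[in X in _ + X]ht /t -big_split /=.
  apply: eq_bigr => x _; rewrite /a' /b' /c.
  have [h|h] := leP (u x) (v x).
    by rewrite subrr add0r ler0_norm ?subr_le0 // opprB.
  by rewrite subrr addr0 gtr0_norm ?subr_gt0.
rewrite hd.
have split_ : forall z, \sum_x u x * K x z - \sum_x v x * K' x z =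
   \sum_x c x * (K x z - K' x z) + (\sum_x a' x * K x z - \sum_x b' x * K' x z).
  move=> z; rewrite /a' /b'.
  under [in RHS]eq_bigr do rewrite mulrBr.
  under [X in _ = _ + (X - _)]eq_bigr do rewrite mulrBl.
  under [X in _ = _ + (_ - X)]eq_bigr do rewrite mulrBl.
  rewrite !sumrB; lra.
rewrite (l1_ext split_).
apply: le_trans (l1_D _ _) _.
rewrite [X in _ <= X]addrC; apply: lerD.
  apply: le_trans (l1_sum (fun x z => c x * (K x z - K' x z))) _.
  apply: (@le_trans _ _ (\sum_x c x * B)).
    apply: ler_sum => x _; rewrite l1_Z ger0_norm //; apply: ler_wpM2l => //.
  by rewrite -mulr_suml hc (mulrC 2 t) mulfK.
have t0 : 0 <= t by apply: sumr_ge0.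
have [tz|tp] := eqVneq t 0.
  have az x : a' x = 0 by move/psumr_eq0P: tz => /(_ (fun y _ => a0 y)) /(_ x isT).
  have bz x : b' x = 0.
    by move: ht; rewrite tz => /psumr_eq0P => /(_ (fun y _ => b0 y)) /(_ x isT).
  rewrite tz mulr0 mulr0 /l1 big1 // => z _.
  by rewrite !big1 ?subrr ?normr0 // => x _; rewrite ?az ?bz mul0r.
have tpos : 0 < t by rewrite lt_def tp t0.
rewrite -(ler_pM2l tpos) -[t in t * l1 _](ger0_norm t0) -l1_Z.
have eqf : forall z, t * (\sum_x a' x * K x z - \sum_x b' x * K' x z) =
   \sum_x \sum_y (a' x * b' y) * (K x z - K' y z).
  move=> z; rewrite mulrBr.
  rewrite -{1}ht mulr_suml.
  rewrite /t mulr_suml.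
  under eq_bigr do rewrite mulr_sumr.
  under [X in _ - X]eq_bigr do rewrite mulr_sumr.
  rewrite exchange_big /= -sumrB; apply: eq_bigr => x _.
  rewrite -sumrB; apply: eq_bigr => y _; rewrite mulrBr; congr (_ - _); ring.
rewrite (l1_ext eqf).
apply: le_trans (l1_sum (fun x z => \sum_y (a' x * b' y) * (K x z - K' y z))) _.
apply: (@le_trans _ _ (\sum_x \sum_y (a' x * b' y) * (2 * a))).
  apply: ler_sum => x _.
  apply: le_trans (l1_sum (fun y z => (a' x * b' y) * (K x z - K' y z))) _.
  apply: ler_sum => y _; rewrite l1_Z ger0_norm ?mulr_ge0 //.
  by apply: ler_wpM2l; [apply: mulr_ge0|apply: hKK].
have -> : \sum_x \sum_y (a' x * b' y) * (2 * a) = t * t * (2 * a).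
  rewrite -{2}ht /t !mulr_suml; apply: eq_bigr => x _.
  rewrite mulr_sumr mulr_suml; apply: eq_bigr => y _; ring.
by rewrite le_eqVlt; apply/orP; left; apply/eqP; ring.
Qed.

End L1.

Section Contr.
Variables (R : realType) (E : finType) (Pk : nl_kernel R E).
Hypothesis Pk_prob : forall mu x, is_prob mu -> is_prob (Pk mu x).
Variables (k : nat) (alpha_k lambda_k : R).
Hypotheses (k_ge1 : (1 <= k)%N) (alpha_k_gt0 : 0 < alpha_k) (alpha_k_lt1 : alpha_k < 1).
Hypothesis hi : forall mu nu x y, is_prob mu -> is_prob nu ->
          tv (kstep Pk mu k x) (kstep Pk nu k y) <= 2 * (1 - alpha_k).
Hypotheses (lambda_k_ge0 : 0 <= lambda_k) (lambda_k_le : lambda_k <= alpha_k).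
Hypothesis hii : forall mu nu x, is_prob mu -> is_prob nu ->
          tv (kstep Pk mu k x) (kstep Pk nu k x) <= lambda_k * tv mu nu.

Lemma l1_prob (v : E -> R) : is_prob v -> l1 v = 1.
Proof. by move=> [v0 v1]; rewrite /l1 -v1; apply: eq_bigr => z _; rewrite ger0_norm. Qed.

Lemma l1_le2 (u v : E -> R) : is_prob u -> is_prob v -> l1 (fun z => u z - v z) <= 2.
Proof.
move=> hu hv; apply: le_trans (l1_D u (fun z => - v z)) _.
rewrite (l1_prob hu) (@l1_ext _ _ (fun z => - v z) (fun z => (-1) * v z)); last by move=> z; rewrite mulN1r.
by rewrite l1_Z normrN normr1 mul1r (l1_prob hv).
Qed.

Lemma tv_l1P (u v : E -> R) : is_prob u -> is_prob v -> tv u v = l1 (fun z => u z - v z).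
Proof. by move=> [_ hu] [_ hv]; apply: tv_l1; rewrite hu hv. Qed.

Lemma l1_push nu u v : is_prob nu ->
  l1 (fun z => push Pk nu u z - push Pk nu v z) <= l1 (fun z => u z - v z).
Proof.
move=> hnu.
rewrite (@l1_ext _ _ _ (fun z => \sum_x (u x - v x) * Pk nu x z)); last first.
  by move=> z; rewrite /push -sumrB; apply: eq_bigr => x _; rewrite mulrBl.
apply: le_trans (l1_sum (fun x z => (u x - v x) * Pk nu x z)) _.
rewrite /l1; apply: ler_sum => x _; rewrite -/(l1 _) l1_Z (l1_prob (Pk_prob x hnu)).
by rewrite mulr1.
Qed.

Lemma l1_PS nu l u v : is_prob nu ->
  l1 (fun z => PS Pk nu l u z - PS Pk nu l v z) <= l1 (fun z => u z - v z).
Proof.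
move=> hnu; elim: l => [|l IH] //=.
apply: le_trans IH; apply: l1_push; exact: flow_prob.
Qed.

Lemma decay_k nu u v : is_prob nu -> is_prob u -> is_prob v ->
  l1 (fun z => PS Pk nu k u z - PS Pk nu k v z) <= (1 - alpha_k) * l1 (fun z => u z - v z).
Proof.
move=> hnu hu hv; rewrite !PS_kstep.
have := @dob R E u v (kstep Pk nu k) (kstep Pk nu k) (1 - alpha_k) 0 hu hv.
rewrite mulr0 addr0; apply.
- by move=> x; apply: kstep_prob.
- by move=> x; apply: kstep_prob.
- move=> x y; rewrite -tv_l1P; try exact: kstep_prob; exact: hi.
- by move=> x; rewrite (l1_ext (g := fun _ => 0)) ?/l1 ?big1 ?normr0 // => z; rewrite subrr.
Qed.

Lemma decay nu q r u v : is_prob nu -> is_prob u -> is_prob v ->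
  l1 (fun z => PS Pk nu (q * k + r) u z - PS Pk nu (q * k + r) v z) <=
    (1 - alpha_k) ^+ q * l1 (fun z => u z - v z).
Proof.
elim: q nu u v => [|q IH] nu u v hnu hu hv.
  by rewrite mul0n add0n expr0 mul1r; apply: l1_PS.
rewrite mulSn -addnA (PS_add _ _ k (q * k + r) u) (PS_add _ _ k (q * k + r) v).
have h1 : is_prob (PS Pk nu k u) by apply: PS_prob.
have h2 : is_prob (PS Pk nu k v) by apply: PS_prob.
have h3 : is_prob (flow Pk nu k) by apply: flow_prob.
apply: le_trans (IH _ _ _ h3 h1 h2) _.
rewrite exprS -mulrA mulrCA; apply: ler_wpM2l; first by apply/exprn_ge0; rewrite subr_ge0; apply: ltW.
exact: decay_k.
Qed.

Lemma flow_inv pi n : nl_invariant Pk pi -> flow Pk pi n = pi.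
Proof.
move=> [_ hpi]; elim: n => [|n IH] //=; rewrite IH.
by apply: funext => y; rewrite hpi.
Qed.

Lemma D_contr mu pi n : is_prob mu -> nl_invariant Pk pi ->
  l1 (fun z => flow Pk mu (n + k) z - pi z) <=
  l1 (fun z => flow Pk mu n z - pi z) -
     alpha_k / 2 * l1 (fun z => flow Pk mu n z - pi z) ^+ 2.
Proof.
move=> hmu hpi.
have ppi : is_prob pi by case: hpi.
have pn : is_prob (flow Pk mu n) by apply: flow_prob.
set D := l1 (fun z => flow Pk mu n z - pi z).
have D0 : 0 <= D by apply: l1_ge0.
have D2 : D <= 2 by apply: l1_le2.
have e1 : flow Pk mu (n + k) = PS Pk (flow Pk mu n) k (flow Pk mu n).
  by rewrite PS_flow flow_shift.
have e2 : pi = PS Pk pi k pi by rewrite PS_flow flow_inv.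
rewrite e1 [X in fun z => _ - X z]e2 !PS_kstep.
have := @dob R E (flow Pk mu n) pi (kstep Pk (flow Pk mu n) k) (kstep Pk pi k)
   (1 - alpha_k) (lambda_k * D) pn ppi.
rewrite -/D => h; apply: le_trans (h _ _ _ _) _.
- by move=> x; apply: kstep_prob.
- by move=> x; apply: kstep_prob.
- move=> x y; rewrite -tv_l1P; try exact: kstep_prob; exact: hi.
- move=> x; rewrite -tv_l1P; try exact: kstep_prob.
  by rewrite /D -tv_l1P //; apply: hii.
have h1 : 0 <= (1 - D / 2) * D by apply: mulr_ge0 => //; lra.
have h2 : 0 <= (alpha_k - lambda_k) * ((1 - D / 2) * D) by apply: mulr_ge0 => //; rewrite subr_ge0.
nra.
Qed.

Lemma norm_le_l1 (f : E -> R) x : `|f x| <= l1 f.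
Proof.
by rewrite /l1 (bigD1 x) //= lerDl; apply: sumr_ge0.
Qed.

Lemma abs_sum_le (a b : E -> R) B : (forall y, `|b y| <= B) ->
  `|\sum_y a y * b y| <= l1 a * B.
Proof.
move=> hb; apply: le_trans (ler_norm_sum _ _ _) _.
rewrite /l1 mulr_suml; apply: ler_sum => y _; rewrite normrM.
by apply: ler_wpM2l => //; apply: hb.
Qed.

Lemma cov_bound mu pi (g h : E -> R) i l : is_prob mu -> nl_invariant Pk pi ->
  (forall z, h z = g z - \sum_x g x * pi x) ->
  `| \sum_x \sum_y h x * h y * (flow Pk mu i x * kstep Pk (flow Pk mu i) l x y) | <=
  2 * l1 h ^+ 2 * (1 - alpha_k) ^+ (l %/ k) +
  l1 h * l1 g * l1 (fun z => flow Pk mu (i + l) z - pi z).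
Proof.
move=> hmu hpi hh.
have ppi : is_prob pi by case: hpi.
set F := flow Pk mu i.
have pF : is_prob F by apply: flow_prob.
set Fj := flow Pk mu (i + l).
have pFj : is_prob Fj by apply: flow_prob.
set K := kstep Pk F l.
set H := l1 h.
set q := (l %/ k)%N.
have H0 : 0 <= H by apply: l1_ge0.
have rho0 : 0 <= (1 - alpha_k) ^+ q by apply/exprn_ge0; rewrite subr_ge0; apply: ltW.
have eFj : Fj = PS Pk F l F by rewrite PS_flow /F flow_shift.
have eK x : K x = PS Pk F l (dlt x) by rewrite PS_dlt.
have hK x : l1 (fun y => K x y - Fj y) <= 2 * (1 - alpha_k) ^+ q.
  have pd : is_prob (dlt x : E -> R) by apply: dlt_prob.
  rewrite eK eFj (divn_eq l k); have hd := decay (l %/ k) (l %% k) pF pd pF. apply: le_trans hd _.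
  rewrite mulrC; apply: ler_wpM2r => //.
  exact: l1_le2 pd pF.
have e1 : \sum_x \sum_y h x * h y * (F x * K x y) =
   \sum_x F x * h x * (\sum_y Fj y * h y) +
   \sum_x F x * (h x * \sum_y (K x y - Fj y) * h y).
  rewrite -big_split /=; apply: eq_bigr => x _.
  have -> : \sum_y (K x y - Fj y) * h y = \sum_y K x y * h y - \sum_y Fj y * h y.
    by rewrite -sumrB; apply: eq_bigr => y _; rewrite mulrBl.
  transitivity (F x * h x * \sum_y K x y * h y); last by ring.
  by rewrite mulr_sumr; apply: eq_bigr => y _; ring.
rewrite e1; apply: le_trans (ler_normD _ _) _; rewrite [X in X <= _]addrC; apply: lerD.
  apply: le_trans (@abs_sum_le F (fun x => h x * \sum_y (K x y - Fj y) * h y)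
     (2 * H ^+ 2 * (1 - alpha_k) ^+ q) _) _; last by rewrite (l1_prob pF) mul1r.
  move=> x; rewrite normrM.
  have -> : 2 * H ^+ 2 * (1 - alpha_k) ^+ q = H * (H * (2 * (1 - alpha_k) ^+ q)).
    by rewrite expr2; ring.
  apply: ler_pM => //; first exact: norm_le_l1.
  rewrite mulrC; apply: le_trans (abs_sum_le _ (fun y => norm_le_l1 h y)) _.
  by apply: ler_wpM2r => //; apply: hK.
rewrite (_ : \sum_x F x * h x * _ = (\sum_x F x * h x) * \sum_y Fj y * h y);
  last by rewrite mulr_suml.
rewrite normrM -mulrA; apply: ler_pM => //.
  by apply: le_trans (abs_sum_le _ (fun y => norm_le_l1 h y)) _; rewrite (l1_prob pF) mul1r.
have -> : \sum_y Fj y * h y = \sum_y (Fj y - pi y) * g y.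
  under eq_bigr do rewrite hh mulrBr.
  rewrite sumrB -mulr_suml (proj2 pFj) mul1r.
  under [RHS]eq_bigr do rewrite mulrBl.
  by rewrite sumrB; congr (_ - _); apply: eq_bigr => x _; rewrite mulrC.
rewrite mulrC; apply: le_trans (abs_sum_le _ (fun y => norm_le_l1 g y)) _.
by rewrite mulrC.
Qed.

End Contr.

Local Open Scope classical_set_scope.

Lemma seq_to0 (R : realType) (d : nat -> R) (k : nat) (c M : R) :
  (0 < k)%N -> 0 < c -> (forall n, 0 <= d n) -> (forall n, d n <= M) ->
  (forall n, d (n + k)%N <= d n - c * d n ^+ 2) -> d @ \oo --> 0.
Proof.
move=> k0 c0 d0 dM dk.
apply/cvgr0Pnorm_lt => e e0.
have ce : 0 < c * e ^+ 2 by apply: mulr_gt0 => //; apply: exprn_gt0.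
pose m := (Num.truncn (M / (c * e ^+ 2))).+1.
have hm : M < m%:R * (c * e ^+ 2).
  by rewrite -ltr_pdivrMr //; apply: truncnS_gt.
have dec x : d (x + k)%N <= d x.
  apply: le_trans (dk x) _; rewrite lerBlDr lerDl; apply: mulr_ge0; first exact: ltW.
  exact: sqr_ge0.
have claim : forall j n0, d (n0 + j * k)%N < e \/ d (n0 + j * k)%N <= M - j%:R * (c * e ^+ 2).
  elim=> [|j IH] n0.
    by right; rewrite mul0n addn0 mul0r subr0.
  rewrite mulSnr addnA.
  case: (IH n0) => [h|h]; first by left; apply: le_lt_trans (dec _) h.
  have [h'|h'] := ltrP (d (n0 + j * k)%N) e; first by left; apply: le_lt_trans (dec _) h'.
  right; apply: le_trans (dk _) _.
  have : e ^+ 2 <= d (n0 + j * k)%N ^+ 2.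
    by rewrite ler_pXn2r // ?nnegrE; [exact: ltW|exact: d0].
  move=> hsq; rewrite -natr1 mulrDl mul1r.
  have : c * e ^+ 2 <= c * d (n0 + j * k)%N ^+ 2 by apply: ler_wpM2l => //; exact: ltW.
  lra.
exists (m * k)%N => // n /= hn.
rewrite ger0_norm //.
case: (claim m (n - m * k)%N); rewrite subnK //.
move=> h; have := d0 n; lra.
Qed.

Lemma P_finU (R : realType) (d : measure_display) (T : measurableType d)
  (P : probability T R) (I : finType) (F : I -> set T) :
  (forall i, measurable (F i)) ->
  (forall i j w, F i w -> F j w -> i = j) ->
  P (\bigcup_(i in setT) F i) = (\sum_i P (F i))%E.
Proof.
move=> mF dF; rewrite measure_fin_bigcup; last first.
- by move=> i _; apply: mF.
- by move=> i j _ _ [w [h1 h2]]; apply: (dF i j w).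
- exact: finite_finset.
rewrite (fsbigE (index_enum I)) //.
- by apply: eq_bigl => i; rewrite in_setT.
- exact: index_enum_uniq.
- by move=> i; rewrite mem_index_enum.
Qed.

Section Chain.
Variables (R : realType) (E : finType) (Pk : nl_kernel R E) (mu : E -> R).
Variables (d : measure_display) (T : measurableType d) (P : probability T R)
  (X : nat -> T -> E).
Hypothesis X_chain : nl_markov_chain Pk mu P X.

Definition wt N (p : {ffun 'I_N.+1 -> E}) : R :=
  mu (p (inord 0)) * \prod_(i < N) Pk (flow Pk mu i) (p (inord i)) (p (inord i.+1)).

Definition cell N (p : {ffun 'I_N.+1 -> E}) : set T :=
  [set w | forall i, (i <= N)%N -> X i w = p (inord i)].

Lemma cellP N (p : {ffun 'I_N.+1 -> E}) : measurable (cell p) /\ P (cell p) = (wt p)%:E.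
Proof. exact: (X_chain N (fun i => p (inord i))). Qed.

Lemma cell_sum N (Qn : (nat -> E) -> bool) :
  (forall xs ys, (forall i, (i <= N)%N -> xs i = ys i) -> Qn xs = Qn ys) ->
  measurable [set w | Qn (fun i => X i w)] /\
  P [set w | Qn (fun i => X i w)] =
    (\sum_(p : {ffun 'I_N.+1 -> E}) (if Qn (fun i => p (inord i)) then wt p else 0))%:E.
Proof.
move=> hQ.
have -> : [set w | Qn (fun i => X i w)] =
    \bigcup_(p in (setT : set {ffun 'I_N.+1 -> E})) (if Qn (fun i => p (inord i)) then cell p else set0).
  apply/seteqP; split => w /=.
    move=> hw; exists [ffun i : 'I_N.+1 => X i w] => //.
    have hc : cell [ffun i : 'I_N.+1 => X i w] w.
      by move=> i hi; rewrite ffunE inordK.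
    suff -> : Qn (fun i => [ffun i : 'I_N.+1 => X i w] (inord i)) = Qn (fun i => X i w).
      by rewrite hw.
    by apply: hQ => i hi; rewrite ffunE inordK.
  move=> [p _]; case: ifP => // hq hc.
  by rewrite (hQ _ (fun i => p (inord i))) // => i hi; apply: hc.
split.
  apply: fin_bigcup_measurable; first exact: finite_finset.
  by move=> p _; case: ifP => _ //; apply: (proj1 (cellP p)).
rewrite P_finU.
- rewrite -sumEFin; apply: eq_bigr => p _; case: ifP => _; last by rewrite measure0.
  exact: (proj2 (cellP p)).
- by move=> p; case: ifP => _ //; apply: (proj1 (cellP p)).
move=> p q w; case: ifP => _ // hp; case: ifP => _ // hq.
apply/ffunP => i; rewrite -(inord_val i) -hp ?hq //; rewrite -ltnS; exact: ltn_ord.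
Qed.

Fixpoint rS (S : nat -> pred E) (m : nat) : E -> R :=
  match m with
  | 0 => fun z => if S 0%N z then mu z else 0
  | m'.+1 => fun z => if S m'.+1 z then push Pk (flow Pk mu m') (rS S m') z else 0
  end.

Definition upd (xs : nat -> E) (m : nat) (z : E) : nat -> E :=
  fun i => if i == m then z else xs i.

Definition Bset (S : nat -> pred E) m N xs z : set T :=
  [set w | (forall i, (i <= m)%N -> S i (X i w)) /\ X m w = z /\
           (forall i, (m < i)%N -> (i <= N)%N -> X i w = xs i)].

Lemma Bset_P S m : forall N, (m <= N)%N -> forall xs z,
  measurable (Bset S m N xs z) /\
  P (Bset S m N xs z) =
    (rS S m z * \prod_(m <= i < N) Pk (flow Pk mu i) (upd xs m z i) (upd xs m z i.+1))%:E.
Proof.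
elim: m => [|m IH] N hmN xs z.
  case hS: (S 0%N z) => /=; rewrite hS; last first.
    have -> : Bset S 0 N xs z = set0.
      apply/seteqP; split => w //= [h1 [h2 _]].
      by move: (h1 0%N (leqnn 0)); rewrite h2 hS.
    by rewrite measure0 mul0r.
  have -> : Bset S 0 N xs z = [set w | forall i, (i <= N)%N -> X i w = upd xs 0 z i].
    apply/seteqP; split => w /=.
      move=> [h1 [h2 h3]] i hi; rewrite /upd; case: eqP => [->//|/eqP hi0].
      by apply: h3 => //; rewrite lt0n.
    move=> h; have h0 : X 0%N w = z by rewrite h // /upd eqxx.
    split; first by move=> i; rewrite leqn0 => /eqP ->; rewrite h0.
    split => // i hi hiN; rewrite h // /upd; case: eqP => // hi0.
    by move: hi; rewrite hi0.
  have [hm hp] := X_chain N (upd xs 0 z).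
  by split => //; rewrite hp big_mkord /upd eqxx.
have hmN' : (m <= N)%N by apply: ltnW.
case hS: (S m.+1 z); last first.
  have -> : Bset S m.+1 N xs z = set0.
    apply/seteqP; split => w //= [h1 [h2 _]].
    by move: (h1 m.+1 (leqnn _)); rewrite h2 hS.
  by rewrite /= hS measure0 mul0r.
have -> : Bset S m.+1 N xs z =
    \bigcup_(x in (setT : set E)) Bset S m N (upd xs m.+1 z) x.
  apply/seteqP; split => w /=.
    move=> [h1 [h2 h3]]; exists (X m w) => //.
    split; first by move=> i hi; apply: h1; apply: (leq_trans hi).
    split => // i hi hiN; rewrite /upd; case: eqP => [->//|/eqP hi1].
    by apply: h3 => //; rewrite ltn_neqAle eq_sym hi1 hi.
  move=> [x _ [h1 [h2 h3]]].
  have hz : X m.+1 w = z by rewrite h3 // /upd eqxx.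
  split.
    move=> i; rewrite leq_eqVlt => /orP [/eqP ->|hi]; first by rewrite hz hS.
    by apply: h1.
  split => // i hi hiN; rewrite h3 ?(ltnW hi) // /upd; case: eqP => // hi1.
  by move: hi; rewrite hi1 ltnn.
split.
  apply: fin_bigcup_measurable; first exact: finite_finset.
  by move=> x _; apply: (proj1 (IH N hmN' _ x)).
rewrite P_finU; last first.
- by move=> x y w [_ [h1 _]] [_ [h2 _]]; rewrite -h1 -h2.
- by move=> x; apply: (proj1 (IH N hmN' _ x)).
rewrite (eq_bigr (fun x => (rS S m x * \prod_(m <= i < N)
   Pk (flow Pk mu i) (upd (upd xs m.+1 z) m x i) (upd (upd xs m.+1 z) m x i.+1))%:E)); last first.
  by move=> x _; rewrite (proj2 (IH N hmN' _ _)).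
rewrite sumEFin /= hS; congr EFin.
rewrite /push mulr_suml; apply: eq_bigr => x _.
rewrite big_ltn // -mulrA; congr (_ * _).
rewrite /upd eqxx (gtn_eqF (ltnSn m)) eqxx; congr (_ * _).
rewrite !big_nat; apply: eq_bigr => i /andP [hi _].
by rewrite (gtn_eqF hi) (gtn_eqF (ltnW hi : (m < i.+1)%N)).
Qed.

Lemma S_P (S : nat -> pred E) N :
  measurable [set w | forall i, (i <= N)%N -> S i (X i w)] /\
  P [set w | forall i, (i <= N)%N -> S i (X i w)] = (\sum_z rS S N z)%:E.
Proof.
have -> : [set w | forall i, (i <= N)%N -> S i (X i w)] =
    \bigcup_(z in (setT : set E)) Bset S N N (fun _ => z) z.
  apply/seteqP; split => w /=.
    move=> h; exists (X N w) => //; split => //; split => // i hi hiN.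
    by move: (leq_trans hi hiN); rewrite ltnn.
  by move=> [z _ [h _]].
split.
  apply: fin_bigcup_measurable; first exact: finite_finset.
  by move=> z _; apply: (proj1 (Bset_P S (leqnn N) _ z)).
rewrite P_finU; last first.
- by move=> x y w [_ [h1 _]] [_ [h2 _]]; rewrite -h1 -h2.
- by move=> z; apply: (proj1 (Bset_P S (leqnn N) _ z)).
rewrite (eq_bigr (fun z => (rS S N z)%:E)); first by rewrite sumEFin.
by move=> z _; rewrite (proj2 (Bset_P S (leqnn N) _ z)) big_geq // mulr1.
Qed.

Lemma rS_free (S : nat -> pred E) a l :
  (forall m', (a < m')%N -> (m' <= a + l)%N -> forall z, S m' z) ->
  rS S (a + l) = PS Pk (flow Pk mu a) l (rS S a).
Proof.
elim: l => [|l IH] h; first by rewrite addn0.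
rewrite addnS /=; apply: funext => z.
rewrite h ?ltnS ?leq_addr ?addnS //.
rewrite IH ?flow_shift // => m' h1 h2; apply: h => //.
by rewrite addnS (leq_trans h2).
Qed.

Lemma rS_pre (S : nat -> pred E) m : (forall m', (m' < m)%N -> forall z, S m' z) ->
  rS S m = fun z => if S m z then flow Pk mu m z else 0.
Proof.
elim: m => [|m IH] h //=.
apply: funext => z; case: ifP => // _.
have -> : rS S m = flow Pk mu m.
  rewrite IH; last by move=> m' hm'; apply: h; apply: (ltn_trans hm').
  by apply: funext => z'; rewrite h.
by [].
Qed.

Hypothesis Pk_prob : forall mu x, is_prob mu -> is_prob (Pk mu x).
Hypothesis mu_prob : is_prob mu.

Lemma pair_sum N i j x y : (i <= j)%N -> (j <= N)%N ->
  \sum_(p : {ffun 'I_N.+1 -> E})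
     (if (p (inord i) == x) && (p (inord j) == y) then wt p else 0) =
  flow Pk mu i x * kstep Pk (flow Pk mu i) (j - i) x y.
Proof.
move=> hij hjN.
pose S : nat -> pred E := fun m z => ((m == i) ==> (z == x)) && ((m == j) ==> (z == y)).
have hiN : (i <= N)%N by apply: leq_trans hjN.
have loc : forall xs ys : nat -> E, (forall m, (m <= N)%N -> xs m = ys m) ->
    (xs i == x) && (xs j == y) = (ys i == x) && (ys j == y).
  by move=> xs ys h; rewrite !h.
have [_ h1] := @cell_sum N (fun xs => (xs i == x) && (xs j == y)) loc.
have [_ h2] := S_P S N.
have eqset : [set w | (X i w == x) && (X j w == y)] =
             [set w | forall m, (m <= N)%N -> S m (X m w)].
  apply/seteqP; split => w /=.
    move=> /andP [/eqP hx /eqP hy] m hm; rewrite /S.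
    by apply/andP; split; apply/implyP => /eqP ->; rewrite ?hx ?hy.
  move=> h; move/andP: (h i hiN) => [+ _]; rewrite eqxx /= => ->.
  by move/andP: (h j hjN) => [_]; rewrite eqxx /=.
move: h1; rewrite eqset h2 => -[<-].
have fl : forall n, is_prob (flow Pk mu n) by move=> n; apply: flow_prob.
rewrite -(subnKC hjN) rS_free; last first.
  move=> m' h3 _ z; rewrite /S (gtn_eqF h3) (gtn_eqF (leq_ltn_trans hij h3)).
  by [].
rewrite PS_sum //.
have pre : rS S i = fun z => if S i z then flow Pk mu i z else 0.
  apply: rS_pre => m' hm' z; rewrite /S (ltn_eqF hm') (ltn_eqF (leq_trans hm' hij)).
  by [].
move: hij; rewrite leq_eqVlt => /orP [/eqP eij|lij].
  subst j; rewrite subnn pre /S (bigD1 x) //= !eqxx /= big1 ?addr0.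
    by case: (x == y); rewrite ?mulr1 ?mulr0.
  by move=> z /negbTE ->.
have j0 : (0 < j)%N by apply: leq_ltn_trans lij.
have hij1 : (i <= j.-1)%N by rewrite -ltnS prednK.
have e1 : (j - i = (j.-1 - i).+1)%N by rewrite -subSn // prednK.
have rj : forall z, rS S j z =
    if z == y then push Pk (flow Pk mu j.-1) (rS S j.-1) z else 0.
  move=> z; rewrite -[in LHS](prednK j0) /= prednK // /S (gtn_eqF lij) eqxx /=.
  by [].
rewrite (eq_bigr _ (fun z _ => rj z)) (bigD1 y) //= eqxx big1 ?addr0; last first.
  by move=> z /negbTE ->.
have e2 : rS S j.-1 = PS Pk (flow Pk mu i) (j.-1 - i) (rS S i).
  rewrite -{1}(subnKC hij1) rS_free // => m' h3 h4 z.
  rewrite (subnKC hij1) in h4.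
  have h5 : (m' < j)%N by apply: (leq_ltn_trans h4); rewrite ltn_predL.
  by rewrite /S (gtn_eqF h3) (ltn_eqF h5).
rewrite e2 -[X in push Pk (flow Pk mu X)](subnKC hij1) -flow_shift.
change (PS Pk (flow Pk mu i) (j.-1 - i).+1 (rS S i) y =
  flow Pk mu i x * kstep Pk (flow Pk mu i) (j - i) x y).
rewrite -e1 PS_kstep pre /= (bigD1 x) //= /S (ltn_eqF lij) !eqxx /= big1 ?addr0 //.
by move=> z /negbTE ->; rewrite mul0r.
Qed.

End Chain.

Lemma sum_shift_le (R : realType) (e : nat -> R) n i :
  (forall l, 0 <= e l) -> (i <= n)%N ->
  \sum_(j < n) (if (i <= j)%N then e (j - i)%N else 0) <= \sum_(l < n) e l.
Proof.
move=> e0 hin.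
rewrite -(big_mkord xpredT (fun j => if (i <= j)%N then e (j - i)%N else 0)).
rewrite -(big_mkord xpredT e).
rewrite (big_cat_nat (leq0n i) hin) /= big1_seq ?add0r; last first.
  by move=> j /andP [_]; rewrite mem_index_iota => /andP [_ hj]; rewrite leqNgt hj.
rewrite (big_cat_nat (leq0n (n - i)) (leq_subr i n)) /=.
rewrite -{1}(add0n i) big_addn.
have -> : \sum_(0 <= j < n - i) (if (i <= j + i)%N then e (j + i - i)%N else 0) =
          \sum_(0 <= j < n - i) e j.
  by apply: eq_bigr => j _; rewrite leq_addl addnK.
rewrite lerDl; apply: sumr_ge0 => j _; exact: e0.
Qed.

Lemma double_bound (R : realType) n (c : nat -> nat -> R) (e b : nat -> R) :
  (forall l, 0 <= e l) -> (forall l, 0 <= b l) ->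
  (forall i j, (i <= j)%N -> (j < n)%N -> `|c i j| <= e (j - i)%N + b j) ->
  (forall i j, c i j = c j i) ->
  \sum_(i < n) \sum_(j < n) c i j <= 2 * n%:R * \sum_(l < n) (e l + b l).
Proof.
move=> e0 b0 hc csym.
pose u i j := if (i <= j)%N then e (j - i)%N + b j else 0.
have u0 i j : 0 <= u i j by rewrite /u; case: ifP => // _; apply: addr_ge0.
have h1 : \sum_(i < n) \sum_(j < n) c i j <=
          \sum_(i < n) \sum_(j < n) (u i j + u j i).
  apply: ler_sum => i _; apply: ler_sum => j _.
  apply: le_trans (ler_norm _) _.
  case: (leqP i j) => hij.
    apply: le_trans (hc _ _ hij (ltn_ord j)) _.
    by rewrite -[X in X <= _]addr0; apply: lerD; [rewrite /u hij|exact: u0].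
  rewrite csym; apply: le_trans (hc _ _ (ltnW hij) (ltn_ord i)) _.
  by rewrite -[X in X <= _]add0r; apply: lerD; [exact: u0|rewrite /u (ltnW hij)].
apply: le_trans h1 _.
rewrite (eq_bigr (fun i : 'I_n => \sum_(j < n) u i j + \sum_(j < n) u j i));
  last by move=> i _; rewrite big_split.
rewrite big_split /= [X in _ + X <= _]exchange_big /= -mulr2n -[X in X <= _]mulr_natl.
rewrite -mulrA; apply: ler_wpM2l => //.
rewrite -[X in _ <= X]mul1r -[1]/(1%:R) -mulr_natl mulr1.
rewrite big_split /= mulrDr.
apply: (@le_trans _ _ (\sum_(i < n) (\sum_(l < n) e l + \sum_(l < n) b l))).
  apply: ler_sum => i _.
  rewrite /u (eq_bigr (fun j : 'I_n => (if (i <= j)%N then e (j - i)%N else 0) +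
                               (if (i <= j)%N then b j else 0))); last first.
    by move=> j _; case: ifP; rewrite ?addr0.
  rewrite big_split /=; apply: lerD.
    by apply: sum_shift_le => //; apply: ltnW.
  by apply: ler_sum => j _; case: ifP.
by rewrite big_split /= !sumr_const card_ord !mulr_natl.
Qed.

Unset Implicit Arguments.


Lemma rho_div (R : realType) (r : R) (k : nat) : 0 <= r -> r < 1 -> (0 < k)%N ->
  (fun l => r ^+ (l %/ k)) @ \oo --> 0.
Proof.
move=> r0 r1 k0; apply/cvgr0Pnorm_lt => e e0.
have : (GRing.exp r : R ^nat) @ \oo --> 0 by apply: cvg_expr; rewrite ger0_norm.
move/cvgr0Pnorm_lt/(_ e e0) => [Q _ hQ].
by exists (Q * k)%N => // l /= hl; apply: hQ => /=; rewrite leq_divRL.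
Qed.

Theorem theorem3 (R : realType) (E : finType) (Pk : nl_kernel R E)
  (Pk_prob : forall mu x, is_prob mu -> is_prob (Pk mu x))
  (k : nat) (k_ge1 : (1 <= k)%N)
  (alpha_k lambda_k lambda_1 : R)
  (alpha_k_gt0 : 0 < alpha_k) (alpha_k_lt1 : alpha_k < 1)
  (hi : forall mu nu x y, is_prob mu -> is_prob nu ->
          tv (kstep Pk mu k x) (kstep Pk nu k y) <= 2 * (1 - alpha_k))
  (lambda_k_ge0 : 0 <= lambda_k) (lambda_k_le : lambda_k <= alpha_k)
  (hii : forall mu nu x, is_prob mu -> is_prob nu ->
          tv (kstep Pk mu k x) (kstep Pk nu k x) <= lambda_k * tv mu nu)
  (hiii : forall mu nu x, is_prob mu -> is_prob nu ->
          tv (Pk mu x) (Pk nu x) <= lambda_1 * tv mu nu)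
  (pi : E -> R) (pi_inv : nl_invariant Pk pi)
  (g : E -> R) (mu : E -> R) (mu_prob : is_prob mu)
  (d : measure_display) (T : measurableType d) (P : probability T R)
  (X : nat -> T -> E) (X_chain : nl_markov_chain Pk mu P X) :
  forall eps : R, 0 < eps ->
    (fun n : nat =>
       P [set w | eps < `| (\sum_(j < n) g (X j w)) / n%:R - \sum_(x : E) g x * pi x |])
      @ \oo --> (0 : \bar R)%E.
Proof.
move=> eps eps0.
have ppi : is_prob pi by case: pi_inv.
set m := \sum_(x : E) g x * pi x.
pose h z := g z - m.
have hh : forall z, h z = g z - \sum_x g x * pi x by [].
pose D n := l1 (fun z => flow Pk mu n z - pi z).
pose H := l1 h.
pose G := l1 g.
pose Fs l := 2 * H ^+ 2 * (1 - alpha_k) ^+ (l %/ k) + H * G * D l.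
pose Qn n (xs : nat -> E) := eps < `|(\sum_(j < n) g (xs j)) / n%:R - m|.
pose a n := \sum_(p : {ffun 'I_n.+1 -> E})
   (if Qn n (fun i => p (inord i)) then wt Pk mu p else 0).
have hA : forall n, P [set w | eps < `|(\sum_(j < n) g (X j w)) / n%:R - m|] = (a n)%:E.
  move=> n; apply: (proj2 (cell_sum X_chain (N := n) (Qn := Qn n) _)).
  move=> xs ys hxy; rewrite /Qn (eq_bigr (fun j : 'I_n => g (ys j))) // => j _.
  by rewrite hxy // ltnW.
have wt0 : forall n (p : {ffun 'I_n.+1 -> E}), 0 <= wt Pk mu p.
  by move=> n p; have [_ hp] := cellP X_chain p; rewrite -lee_fin -hp; apply: measure_ge0.
have cheb : forall n, a n.+1 <= 2 / eps ^+ 2 * arithmetic_mean Fs n.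
  move=> n; set N := n.+1.
  have N0 : N%:R != 0 :> R by rewrite pnatr_eq0.
  pose f (p : {ffun 'I_N.+1 -> E}) := (\sum_(j < N) g (p (inord j))) / N%:R - m.
  pose c i j := \sum_(p : {ffun 'I_N.+1 -> E})
      wt Pk mu p * (h (p (inord i)) * h (p (inord j))).
  pose K := N%:R^-1 * N%:R^-1 / eps ^+ 2.
  have s1 : a N <= \sum_p wt Pk mu p * (f p ^+ 2 / eps ^+ 2).
    apply: ler_sum => p _; case: ifP => hq; last first.
      apply: mulr_ge0; first exact: wt0.
      by apply: divr_ge0; apply: sqr_ge0.
    have hq' : eps < `|f p| by exact: hq.
    rewrite -[X in X <= _]mulr1; apply: ler_wpM2l; first exact: wt0.
    rewrite ler_pdivlMr ?exprn_gt0 // mul1r -(real_normK (num_real (f p))).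
    by rewrite !expr2; apply: ler_pM; rewrite ?ltW.
  have fE p : f p = N%:R^-1 * \sum_(j < N) h (p (inord j)).
    rewrite /f /h sumrB sumr_const card_ord mulrBr [N%:R^-1 * _]mulrC.
    by congr (_ - _); rewrite -[m *+ N]mulr_natl mulKf.
  have s2 : \sum_(p : {ffun 'I_N.+1 -> E}) wt Pk mu p * (f p ^+ 2 / eps ^+ 2) =
            K * \sum_(i < N) \sum_(j < N) c i j.
    transitivity (\sum_(p : {ffun 'I_N.+1 -> E}) \sum_(i < N) \sum_(j < N)
        K * (wt Pk mu p * (h (p (inord i)) * h (p (inord j))))).
      apply: eq_bigr => p _; rewrite fE.
      transitivity (K * wt Pk mu p * ((\sum_(i < N) h (p (inord i))) *
                                      (\sum_(j < N) h (p (inord j))))).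
        by rewrite /K; ring.
      rewrite mulr_suml mulr_sumr; apply: eq_bigr => i _.
      rewrite mulr_sumr mulr_sumr; apply: eq_bigr => j _; ring.
    rewrite /c mulr_sumr.
    under [RHS]eq_bigr do rewrite mulr_sumr.
    under [RHS]eq_bigr do under eq_bigr do rewrite mulr_sumr.
    rewrite exchange_big /=; apply: eq_bigr => i _.
    by rewrite exchange_big.
  have csym : forall i j, c i j = c j i.
    by move=> i j; apply: eq_bigr => p _; rewrite (mulrC (h _)).
  have hc : forall i j, (i <= j)%N -> (j < N)%N ->
      `|c i j| <= 2 * H ^+ 2 * (1 - alpha_k) ^+ ((j - i) %/ k) + H * G * D j.
    move=> i j hij hjN.
    have cE : c i j = \sum_x \sum_y h x * h y *
        \sum_(p : {ffun 'I_N.+1 -> E})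
          (if (p (inord i) == x) && (p (inord j) == y) then wt Pk mu p else 0).
      rewrite /c; symmetry.
      transitivity (\sum_x \sum_y \sum_(p : {ffun 'I_N.+1 -> E})
        (if (p (inord i) == x) && (p (inord j) == y) then wt Pk mu p * (h x * h y) else 0)).
        apply: eq_bigr => x _; apply: eq_bigr => y _; rewrite mulr_sumr.
        by apply: eq_bigr => p _; case: ifP => _; rewrite ?mulr0 // mulrC.
      under eq_bigr do rewrite exchange_big /=.
      rewrite exchange_big /=; apply: eq_bigr => p _.
      rewrite (bigD1 (p (inord i))) //= [X in _ + X]big1 ?addr0; last first.
        by move=> x hx; apply: big1 => y _; rewrite eq_sym (negbTE hx).
      rewrite (bigD1 (p (inord j))) //= !eqxx [X in _ + X]big1 ?addr0 //.
      by move=> y hy; rewrite eq_sym (negbTE hy) andbF.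
    rewrite cE.
    under eq_bigr do under eq_bigr do rewrite (pair_sum X_chain Pk_prob mu_prob _ _ hij (ltnW hjN)).
    have := cov_bound Pk_prob alpha_k_lt1 hi i (j - i) mu_prob pi_inv hh.
    by rewrite subnKC.
  apply: (le_trans s1); rewrite s2.
  apply: le_trans.
    apply: ler_wpM2l; first by rewrite /K !mulr_ge0 ?invr_ge0 ?ler0n ?exprn_ge0 ?ltW.
    apply: (double_bound (e := fun l => 2 * H ^+ 2 * (1 - alpha_k) ^+ (l %/ k))
                         (b := fun l => H * G * D l)).
    - move=> l; rewrite !mulr_ge0 ?exprn_ge0 ?l1_ge0 //.
      by rewrite subr_ge0 ltW.
    - by move=> l; rewrite !mulr_ge0 ?l1_ge0.
    - exact: hc.
    - exact: csym.
  have -> : \sum_(l < N) (2 * H ^+ 2 * (1 - alpha_k) ^+ (l %/ k) + H * G * D l) =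
            \sum_(l < N) Fs l by [].
  rewrite /arithmetic_mean /series /= big_mkord.
  rewrite le_eqVlt; apply/orP; left; apply/eqP.
  rewrite /K -/N; field.
  rewrite N0 /= gt_eqF //.
have Fs0 : Fs @ \oo --> 0.
  rewrite /Fs -(addr0 0); apply: cvgD.
    rewrite -(mulr0 (2 * H ^+ 2)); apply: cvgMr; apply: rho_div => //.
      by rewrite subr_ge0 ltW.
    by rewrite ltrBlDr ltrDl.
  rewrite -(mulr0 (H * G)); apply: cvgMr.
  apply: (@seq_to0 _ D k (alpha_k / 2) 2) => //.
  - by apply: divr_gt0.
  - by move=> n; apply: l1_ge0.
  - by move=> n; apply: l1_le2 => //; apply: flow_prob.
  - by move=> n; apply: (D_contr Pk_prob hi lambda_k_le hii n mu_prob pi_inv).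
rewrite (_ : (fun n => _) = (fun n => (a n)%:E)); last by apply: funext => n; rewrite hA.
apply: cvg_EFin; first by apply: nearW.
suff hs : [sequence a n.+1]_n @ \oo --> 0 by move: hs; rewrite cvg_shiftS.
apply: (@squeeze_cvgr _ _ _ _ (fun _ => 0) (fun n => 2 / eps ^+ 2 * arithmetic_mean Fs n)).
- apply: nearW => n /=; rewrite cheb andbT; apply: sumr_ge0 => p _.
  by case: ifP => // _; exact: wt0.
- by apply/cvgr0Pnorm_lt => e e0; apply: nearW => n; rewrite normr0.
- rewrite -(mulr0 (2 / eps ^+ 2)); apply: cvgMr; exact: cesaro.
Qed.
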